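(* Let $K$ be a field, $A$ a $K$-algebra and $X$ a set such that, for some $P\subseteq K[X^*]$, the natural morphism $\theta:K[X^*]\to A$ induces an isomorphism $K[X^*]/\langle P\rangle\to A$ (where $\langle P\rangle$ is the two-sided ideal generated by $P$). Let $Q\subseteq K[X^*]$ and $Q':=\theta(Q)$. Define the mixed set $F:=(\dashv\! Q,P)$ with tagged part $\dashv\! Q=\{\dashv\! q: q\in Q\}$ and untagged part $P$. Then there is a bijection of sets $$\frac{K[\dashv\! X^*]}{\stackrel{*}{\leftrightarrow}_F}\;\cong\;\frac{A}{\langle Q'\rangle^r},$$ where $\langle Q'\rangle^r$ is the right ideal of $A$ generated by $Q'$ and $A/\langle Q'\rangle^r$ is the set of classes under $a\sim b\iff a-b\in\langle Q'\rangle^r$.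
   Context: $X^*$ is the free monoid on $X$ (including the empty word $id$) and $K[X^*]$ the free noncommutative $K$-algebra with identity on $X$. A monoid well-ordering $>$ on $X^*$ is fixed (a well-ordering such that $m_1>m_2\Rightarrow um_1v>um_2v$ for $u,v\in X^*$); for a nonzero polynomial, $\mathtt{LT}$ is its largest term and $\mathtt{LC}$ its coefficient. Tagged polynomials: $\dashv$ is a symbol; $K[\dashv\! X^*]$ is the $K$-vector space with basis the tagged terms $\dashv\! m$ ($m\in X^*$), a right $K[X^*]$-module via $(\dashv\! m)w=\dashv\!(mw)$. For $p=\sum k_im_i\in K[X^*]$ and $w\in X^*$, $\dashv\! w\,p:=\sum k_i\dashv\!(wm_i)$ and $\dashv\! p:=\dashv\! id\,p$; tagged terms are ordered by $\dashv\! m_1>\dashv\! m_2\iff m_1>m_2$. Reduction: for a mixed set $F=(F_T,F_P)$, $F_T\subseteq K[\dashv\! X^*]$, $F_P\subseteq K[X^*]$ (zero elements ignored), $\to_F$ on $K[\dashv\! X^*]$ is: $f\to_F f-\frac{k}{\mathtt{LC}(f_i)}f_iv$ if $f_i\in F_T$, $v\in X^*$ and $\mathtt{LT}(f_i)v$ occurs in $f$ with coefficient $k\neq0$; and $f\to_F f-\frac{k}{\mathtt{LC}(f_i)}\dashv\! w\,f_i\,v$ if $f_i\in F_P$, $w,v\in X^*$ and $\dashv\!(w\,\mathtt{LT}(f_i)\,v)$ occurs in $f$ with coefficient $k\ne0$. (The paper normalizes all polynomials to be monic.) $\stackrel{*}{\leftrightarrow}_F$ is the reflexive, symmetric, transitive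 closure of $\to_F$. *)

(* Defs.v *)
From HB Require Import structures.
From mathcomp Require Import all_boot all_order all_algebra.
From mathcomp Require Import finmap.
From Stdlib Require Import Relations.Relation_Operators.
From Stdlib Require List.
Set Implicit Arguments. Unset Strict Implicit. Unset Printing Implicit Defensive.
Import GRing.Theory.
Local Open Scope ring_scope.
Local Open Scope fset_scope.

Section FreeAlg.
Variables (K : fieldType) (X : choiceType).

(* Words of X^* are [seq X]; the empty word [::] is id; concatenation is ++. *)

(* K[X^*]: finitely supported functions X^* -> K (coefficient of each word). *)
Definition fpoly := {fsfun seq X -> K with 0}.

(* Tagged polynomials K[-| X^*]: the coefficient of the tagged term -|m.
   As a K-vector space it has the same shape as K[X^*]; [ttag] is -|p. *)
Definition tpoly := {fsfun seq X -> K with 0}.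
Definition ttag (p : fpoly) : tpoly := p.

(* right multiplication by a word:  (f v)(u) = f(m) if u = m ++ v, else 0 *)
Definition rmulw (f : seq X -> K) (v : seq X) : seq X -> K :=
  fun u => let n := (size u - size v)%N in
           if drop n u == v then f (take n u) else 0.
Definition lmulw (w : seq X) (f : seq X -> K) : seq X -> K :=
  fun u => if take (size w) u == w then f (drop (size w) u) else 0.

Definition monoid_wellorder (gt : seq X -> seq X -> Prop) : Prop :=
  [/\ (forall m, ~ gt m m),
      (forall a b c, gt a b -> gt b c -> gt a c),
      (forall a b, a = b \/ gt a b \/ gt b a),
      well_founded (fun a b => gt b a) &
      (forall u v m1 m2, gt m1 m2 -> gt (u ++ m1 ++ v) (u ++ m2 ++ v))].

Definition is_LT (gt : seq X -> seq X -> Prop) (f : seq X -> K) (m : seq X) :=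
  f m != 0 /\ forall m', f m' != 0 -> m' = m \/ gt m m'.

Definition red_step (gt : seq X -> seq X -> Prop)
  (FT : tpoly -> Prop) (FP : fpoly -> Prop) (f g : tpoly) : Prop :=
  (exists fi m v, FT fi /\ is_LT gt fi m /\ f (m ++ v) != 0 /\
     forall u, g u = f u - (f (m ++ v) / fi m) * rmulw fi v u)
  \/
  (exists fi m w v, FP fi /\ is_LT gt fi m /\ f (w ++ m ++ v) != 0 /\
     forall u, g u = f u - (f (w ++ m ++ v) / fi m) * lmulw w (rmulw fi v) u).

Definition red_equiv gt FT FP : tpoly -> tpoly -> Prop :=
  clos_refl_sym_trans tpoly (red_step gt FT FP).

Definition in_ideal2 (P : fpoly -> Prop) (f : fpoly) : Prop :=
  exists s : seq (K * seq X * fpoly * seq X),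
    (forall t, List.In t s -> P t.1.2) /\
    forall u, f u = \sum_(t <- s) t.1.1.1 * lmulw t.1.1.2 (rmulw t.1.2 t.2) u.

Variable A : algType K.

Definition wordA (iota : X -> A) (m : seq X) : A := \prod_(x <- m) iota x.
Definition theta (iota : X -> A) (f : fpoly) : A :=
  \sum_(m <- finsupp f) f m *: wordA iota m.

Definition in_rideal (iota : X -> A) (Q : fpoly -> Prop) (a : A) : Prop :=
  exists s : seq (fpoly * A),
    (forall t, List.In t s -> Q t.1) /\ a = \sum_(t <- s) theta iota t.1 * t.2.

End FreeAlg.

Definition quot (T : Type) (R : T -> T -> Prop) : Type :=
  {C : T -> Prop | exists x, forall y, C y <-> R x y}.

(* Main.v *)
Require Import Defs.
From HB Require Import structures.
From mathcomp Require Import all_boot all_order all_algebra.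
From mathcomp Require Import finmap.
From Stdlib Require Import Relations.Relation_Operators.
From Stdlib Require Import FunctionalExtensionality PropExtensionality ProofIrrelevance.
From Stdlib Require List.
From mathcomp Require Import ring.
Import GRing.Theory.
Local Open Scope ring_scope.
Set Implicit Arguments. Unset Strict Implicit.

Lemma quot_eq (T : Type) (R : T -> T -> Prop) (C1 C2 : quot R) :
  (forall y, proj1_sig C1 y <-> proj1_sig C2 y) -> C1 = C2.
Proof.
case: C1 C2 => [c1 p1] [c2 p2] /= H.
have E : c1 = c2.
  apply: functional_extensionality => y; apply: propositional_extensionality; exact: H.
subst c2; f_equal; apply: proof_irrelevance.
Qed.

Lemma quot_bij (T U : Type) (R : T -> T -> Prop) (S : U -> U -> Prop) (h : T -> U)
  (Srefl : forall u, S u u) (Ssym : forall u v, S u v -> S v u)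
  (Strans : forall u v w, S u v -> S v w -> S u w)
  (hR : forall x y, R x y <-> S (h x) (h y))
  (hs : forall u, exists x, S (h x) u) :
  exists phi : quot R -> quot S, bijective phi.
Proof.
have phiP : forall C : quot R, exists u, forall v,
    (exists x, proj1_sig C x /\ S (h x) v) <-> S u v.
  move=> [c [x0 Hx0]] /=; exists (h x0) => v; split.
    by move=> [x [/Hx0 /hR Hx Hv]]; exact: (Strans _ _ _) Hx Hv.
  by move=> Hv; exists x0; split => //; apply/Hx0/hR.
have psiP : forall D : quot S, exists x0, forall x,
    (exists u, proj1_sig D u /\ S (h x) u) <-> R x0 x.
  move=> [d [u0 Hu0]] /=; have [x0 Hx0] := hs u0; exists x0 => x; split.
    move=> [u [/Hu0 Hu Hxu]]; apply/hR.
    exact: (Strans _ _ _) (Strans _ _ _ Hx0 Hu) (Ssym _ _ Hxu).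
  move=> /hR Hx; exists u0; split; first exact/Hu0.
  exact: (Strans _ _ _) (Ssym _ _ Hx) Hx0.
exists (fun C => exist (fun c => exists u, forall v, c v <-> S u v)
  (fun v => exists x, proj1_sig C x /\ S (h x) v) (phiP C)).
exists (fun D => exist (fun c => exists u, forall v, c v <-> R u v)
  (fun x => exists u, proj1_sig D u /\ S (h x) u) (psiP D)).
- move=> [c [x0 Hx0]]; apply: quot_eq => y /=; split.
    move=> [u [[x [/Hx0 Hx Hxu]] Hyu]]; apply/Hx0/hR.
    exact: (Strans _ _ _) (Strans _ _ _ (proj1 (hR _ _) Hx) Hxu) (Ssym _ _ Hyu).
  move=> /Hx0 Hy; exists (h y); split; last exact: Srefl.
  by exists x0; split; [apply/Hx0/hR; exact: Srefl | exact/hR].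
- move=> [d [u0 Hu0]]; apply: quot_eq => v /=; split.
    move=> [x [[u [/Hu0 Hu Hxu]] Hxv]]; apply/Hu0.
    exact: (Strans _ _ _) (Strans _ _ _ Hu (Ssym _ _ Hxu)) Hxv.
  move=> /Hu0 Hv; have [x Hx] := hs u0; exists x; split.
    by exists u0; split => //; exact/Hu0.
  exact: (Strans _ _ _) Hx Hv.
Qed.

Section Alg.
Variables (K : fieldType) (X : choiceType) (A : algType K) (iota : X -> A).

Definition sumA (T : seq X -> K) (s : seq (seq X)) : A :=
  \sum_(m <- s) T m *: wordA iota m.
Definition cov (T : seq X -> K) (s : seq (seq X)) :=
  uniq s /\ forall u, T u != 0 -> u \in s.

Lemma sumA_filter T s : sumA T s = \sum_(m <- [seq m <- s | T m != 0]) T m *: wordA iota m.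
Proof.
rewrite /sumA big_filter [RHS]big_mkcond; apply: eq_bigr => m _.
by case: eqP => // ->; rewrite scale0r.
Qed.

Lemma sumA_supp T s1 s2 : cov T s1 -> cov T s2 -> sumA T s1 = sumA T s2.
Proof.
move=> [u1 c1] [u2 c2]; rewrite !sumA_filter; apply: perm_big.
apply: uniq_perm; rewrite ?filter_uniq // => m; rewrite !mem_filter.
by case: (boolP (T m != 0)) => //= /[dup] /c1 -> /c2 ->.
Qed.

Lemma cov_finsupp (f : fpoly K X) : cov f (finsupp f).
Proof. by split; [exact: fset_uniq | move=> u; rewrite mem_finsupp]. Qed.

Lemma thetaE (f : fpoly K X) s : cov f s -> theta iota f = sumA f s.
Proof.
move=> cs; rewrite /theta -/(sumA f _); exact: sumA_supp (cov_finsupp f) cs.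
Qed.


Lemma cov_sub T s s' : cov T s -> uniq s' -> {subset s <= s'} -> cov T s'.
Proof. by move=> [_ c] u sub; split => // v /c /sub. Qed.

Lemma sumA_ext T1 T2 s : T1 =1 T2 -> sumA T1 s = sumA T2 s.
Proof. by move=> E; apply: eq_bigr => m _; rewrite E. Qed.

Lemma sumA_lin T1 T2 c s :
  sumA (fun u => T1 u + c * T2 u) s = sumA T1 s + c *: sumA T2 s.
Proof.
rewrite /sumA scaler_sumr -big_split /=; apply: eq_bigr => m _.
by rewrite scalerDl scalerA.
Qed.

Lemma cov_lin T1 T2 c s1 s2 : cov T1 s1 -> cov T2 s2 ->
  cov (fun u => T1 u + c * T2 u) (undup (s1 ++ s2)).
Proof.
move=> [_ c1] [_ c2]; split; first exact: undup_uniq.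
move=> u; rewrite mem_undup mem_cat.
case: (boolP (T1 u != 0)) => [/c1 -> //|]; rewrite negbK => /eqP ->.
rewrite add0r; case: (boolP (T2 u != 0)) => [/c2 -> |]; first by rewrite orbT.
by rewrite negbK => /eqP ->; rewrite mulr0 eqxx.
Qed.

Lemma cov_l1 T1 T2 s1 s2 : cov T1 s1 -> cov T2 s2 -> cov T1 (undup (s1 ++ s2)).
Proof.
move=> c1 _; apply: cov_sub c1 (undup_uniq _) _ => u.
by rewrite mem_undup mem_cat => ->.
Qed.

Lemma cov_l2 T1 T2 s1 s2 : cov T1 s1 -> cov T2 s2 -> cov T2 (undup (s1 ++ s2)).
Proof.
move=> _ c2; apply: cov_sub c2 (undup_uniq _) _ => u.
by rewrite mem_undup mem_cat => ->; rewrite orbT.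
Qed.

Lemma mkfs T s : cov T s -> exists g : fpoly K X, forall u, g u = T u.
Proof.
move=> [_ c]; exists [fsfun x in [fset y | y in s]%fset => T x | 0] => u.
rewrite fsfun_fun; case: ifP => // /negbT; rewrite !inE /= => nu; case: (eqVneq (T u) 0) => [->//| /c]; by rewrite (negbTE nu).
Qed.

Lemma wordA_cat m v : wordA iota (m ++ v) = wordA iota m * wordA iota v.
Proof. by rewrite /wordA big_cat. Qed.

Lemma rmulw_cat (T : seq X -> K) m v : rmulw T v (m ++ v) = T m.
Proof.
rewrite /rmulw size_cat addnK drop_size_cat // take_size_cat //.
by rewrite eqxx.
Qed.

Lemma lmulw_cat w (T : seq X -> K) m : lmulw w T (w ++ m) = T m.
Proof. by rewrite /lmulw take_size_cat // drop_size_cat // eqxx. Qed.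

Lemma catIr (a b v : seq X) : a ++ v = b ++ v -> a = b.
Proof.
move=> E; have Hs : size a = size b.
  by move: (congr1 size E); rewrite !size_cat => /addIn.
by move/eqP: E; rewrite eqseq_cat // eqxx andbT => /eqP.
Qed.

Lemma catIl (w a b : seq X) : w ++ a = w ++ b -> a = b.
Proof. by move/eqP; rewrite eqseq_cat // eqxx => /eqP. Qed.

Lemma cov_r T s v : cov T s -> cov (rmulw T v) (map (cat^~ v) s).
Proof.
move=> [us c]; split.
  by rewrite map_inj_uniq // => a b /=; apply: catIr.
move=> u; rewrite /rmulw; set n := (size u - size v)%N.
case: ifP => [/eqP Ed|]; last by rewrite eqxx.
move=> /c Hin.
by rewrite -(cat_take_drop n u) Ed; apply: map_f.
Qed.

Lemma cov_l T s w : cov T s -> cov (lmulw w T) (map (cat w) s).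
Proof.
move=> [us c]; split.
  by rewrite map_inj_uniq // => a b /=; apply: catIl.
move=> u; rewrite /lmulw.
case: ifP => [/eqP Ed|]; last by rewrite eqxx.
move=> /c Hin.
by rewrite -(cat_take_drop (size w) u) Ed; apply: map_f.
Qed.

Lemma rsum T s s' v : cov T s' -> cov (rmulw T v) s ->
  sumA (rmulw T v) s = sumA T s' * wordA iota v.
Proof.
move=> c' c; rewrite (sumA_supp c (cov_r v c')) /sumA big_map mulr_suml.
by apply: eq_bigr => m _; rewrite rmulw_cat wordA_cat scalerAl.
Qed.

Lemma lsum T s s' w : cov T s' -> cov (lmulw w T) s ->
  sumA (lmulw w T) s = wordA iota w * sumA T s'.
Proof.
move=> c' c; rewrite (sumA_supp c (cov_l w c')) /sumA big_map mulr_sumr.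
by apply: eq_bigr => m _; rewrite lmulw_cat wordA_cat scalerAr.
Qed.

Lemma max_list (gt : seq X -> seq X -> Prop)
  (tr : forall a b c, gt a b -> gt b c -> gt a c)
  (tot : forall a b, a = b \/ gt a b \/ gt b a) x l :
  exists m, m \in x :: l /\ forall m', m' \in x :: l -> m' = m \/ gt m m'.
Proof.
elim: l x => [|y l IH] x.
  by exists x; split; [rewrite inE | move=> m'; rewrite inE => /eqP; left].
have [m [Hm Hmax]] := IH y.
have [Exm|[Hxm|Hmx]] := tot x m.
- exists m; split; first by rewrite inE Hm orbT.
  move=> m'; rewrite inE => /orP[/eqP->|/Hmax //]; by left.
- exists x; split; first by rewrite inE eqxx.
  move=> m'; rewrite inE => /orP[/eqP->|/Hmax [->|H]]; [by left|by right|].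
  by right; exact: tr Hxm H.
- exists m; split; first by rewrite inE Hm orbT.
  move=> m'; rewrite inE => /orP[/eqP->|/Hmax //]; by right.
Qed.

Lemma LT_exists (gt : seq X -> seq X -> Prop) (gt_wo : monoid_wellorder gt)
  (f : seq X -> K) s : cov f s -> (exists u, f u != 0) -> exists m, is_LT gt f m.
Proof.
case: gt_wo => _ tr tot _ _ [_ c] [u fu].
have : u \in [seq m <- s | f m != 0] by rewrite mem_filter fu (c _ fu).
case: [seq m <- s | f m != 0] (filter_all (fun m => f m != 0) s) (fun m => @mem_filter _ (fun m => f m != 0) m s) => [//|x l] Hall Hmem _.
have [m [Hm Hmax]] := max_list tr tot x l.
exists m; split; first by move: Hm; rewrite Hmem => /andP[].
by move=> m' fm'; apply: Hmax; rewrite Hmem fm' (c _ fm').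
Qed.

Lemma move_gen (rel : tpoly K X -> tpoly K X -> Prop) (R : seq X -> K) key L sR :
  L != 0 -> R key = L -> cov R sR ->
  (forall f g : tpoly K X, f key != 0 ->
      (forall u, g u = f u - f key / L * R u) -> rel f g) ->
  forall c (r r' : tpoly K X), (forall u, r' u = r u + c * R u) ->
  clos_refl_sym_trans _ rel r r'.
Proof.
move=> L0 RL cR Hstep c r r' Hr'.
have [c0|c0] := eqVneq c 0.
  suff -> : r' = r by apply: rst_refl.
  by apply/fsfunP => u; rewrite Hr' c0 mul0r addr0.
have Hr'k : r' key = r key + c * L by rewrite Hr' RL.
have [k0|k0] := eqVneq (r key) 0.
  apply: rst_sym; apply: rst_step; apply: Hstep.
    by rewrite Hr'k k0 add0r mulf_neq0.
  move=> u; rewrite Hr' Hr'k k0 add0r mulfK //; ring.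
have [r0 Hr0] := mkfs (cov_lin (- (r key / L)) (cov_finsupp r) cR).
have s1 : rel r r0.
  by apply: Hstep => // u; rewrite Hr0 mulNr.
have [k1|k1] := eqVneq (r' key) 0.
  apply: rst_step; apply: Hstep => // u.
  have -> : r key / L = - c.
    apply: (mulIf L0); rewrite mulfVK // mulNr; apply/eqP.
    by rewrite -subr_eq0 opprK -Hr'k k1.
  by rewrite Hr' mulNr opprK.
apply: (rst_trans _ _ _ r0); first by apply: rst_step.
apply: rst_sym; apply: rst_step.
apply: Hstep => // u; rewrite Hr0 Hr' Hr'k mulrDl mulfK //; ring.
Qed.

Lemma cov_ext T1 T2 s : T1 =1 T2 -> cov T1 s -> cov T2 s.
Proof. by move=> E [u c]; split => // x; rewrite -E; apply: c. Qed.

Lemma cov_scale T s c : cov T s -> cov (fun u => c * T u) s.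
Proof.
move=> [u h]; split => // x; case: (eqVneq (T x) 0) => [->|/h //].
by rewrite mulr0 eqxx.
Qed.

Lemma theta_comb (f g : fpoly K X) (R : seq X -> K) sR c : cov R sR ->
  (forall u, g u = f u + c * R u) -> theta iota g = theta iota f + c *: sumA R sR.
Proof.
move=> cR Hg.
have cs := cov_lin c (cov_finsupp f) cR.
rewrite (thetaE (cov_ext (fun u => esym (Hg u)) cs)).
rewrite (sumA_ext _ Hg) sumA_lin (thetaE (cov_l1 (cov_finsupp f) cR)).
by rewrite (sumA_supp (cov_l2 (cov_finsupp f) cR) cR).
Qed.

Lemma rsum_theta (q : fpoly K X) v :
  sumA (rmulw q v) (map (cat^~ v) (finsupp q)) = theta iota q * wordA iota v.
Proof.
by rewrite (rsum (cov_finsupp q) (cov_r v (cov_finsupp q))) (thetaE (cov_finsupp q)).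
Qed.

Lemma lrsum_theta (q : fpoly K X) w v :
  sumA (lmulw w (rmulw q v)) (map (cat w) (map (cat^~ v) (finsupp q))) =
  wordA iota w * (theta iota q * wordA iota v).
Proof.
by rewrite (lsum (cov_r v (cov_finsupp q)) (cov_l w (cov_r v (cov_finsupp q)))) rsum_theta.
Qed.

Lemma rmulw_zero (T : seq X -> K) v : T =1 (fun=> 0) -> rmulw T v =1 (fun=> 0).
Proof. by move=> E u; rewrite /rmulw; case: ifP => //; rewrite E. Qed.

Lemma lmulw_zero (T : seq X -> K) w : T =1 (fun=> 0) -> lmulw w T =1 (fun=> 0).
Proof. by move=> E u; rewrite /lmulw; case: ifP => //; rewrite E. Qed.

Lemma lmulw_nil (T : seq X -> K) u : lmulw [::] T u = T u.
Proof. by rewrite /lmulw take0 drop0 eqxx. Qed.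

Lemma rmulw_nil (T : seq X -> K) u : rmulw T [::] u = T u.
Proof. by rewrite /rmulw subn0 drop_size take_size eqxx. Qed.

Lemma nonzero_or (f : fpoly K X) : f =1 (fun=> 0) \/ exists u, f u != 0.
Proof.
case: (finsupp f =P fset0) => [E|/eqP].
  by left => u; apply/eqP; rewrite -[_ == _]negbK -mem_finsupp E inE.
case/fset0Pn => u; rewrite mem_finsupp => H; right; by exists u.
Qed.

Section Ideal.
Variables (gt : seq X -> seq X -> Prop) (gt_wo : monoid_wellorder gt)
  (P Q : fpoly K X -> Prop).

Definition FT := fun t : tpoly K X => exists q, Q q /\ t = ttag q.
Definition RE := red_equiv gt FT P.

Definition good (T : seq X -> K) :=
  (exists s, cov T s) /\
  forall r r' : tpoly K X, (forall u, r' u = r u + T u) -> RE r r'.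

Lemma good_ext T1 T2 : T1 =1 T2 -> good T1 -> good T2.
Proof.
move=> E [[s c] H]; split; first by exists s; exact: cov_ext c.
by move=> r r' Hr; apply: H => u; rewrite E.
Qed.

Lemma good0 : good (fun=> 0).
Proof.
split; first by exists [::]; split => // u; rewrite eqxx.
move=> r r' Hr; suff -> : r' = r by apply: rst_refl.
by apply/fsfunP => u; rewrite Hr addr0.
Qed.

Lemma goodD T1 T2 : good T1 -> good T2 -> good (fun u => T1 u + T2 u).
Proof.
move=> [[s1 c1] H1] [[s2 c2] H2]; split.
  exists (undup (s1 ++ s2)); apply: cov_ext (cov_lin 1 c1 c2) => u.
  by rewrite mul1r.
move=> r r' Hr.
have [r'' Hr''] := mkfs (cov_lin 1 (cov_finsupp r) c1).
apply: (rst_trans _ _ _ r'').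
  by apply: H1 => u; rewrite Hr'' mul1r.
by apply: H2 => u; rewrite Hr Hr'' mul1r addrA.
Qed.

Lemma good_sum (I : Type) (l : seq I) (F : I -> seq X -> K) :
  (forall i, List.In i l -> good (F i)) -> good (fun u => \sum_(i <- l) F i u).
Proof.
elim: l => [|i l IH] H.
  by apply: good_ext good0 => u; rewrite big_nil.
apply: good_ext (goodD (H i (or_introl erefl)) (IH (fun j Hj => H j (or_intror Hj)))).
by move=> u; rewrite big_cons.
Qed.

Lemma goodM1 q c v : Q q -> good (fun u => c * rmulw q v u).
Proof.
move=> Qq; split.
  by exists (map (cat^~ v) (finsupp q)); apply: cov_scale; apply: cov_r; apply: cov_finsupp.
move=> r r' Hr.
case: (nonzero_or q) => [q0|nz].
  suff -> : r' = r by apply: rst_refl.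
  by apply/fsfunP => u; rewrite Hr rmulw_zero // mulr0 addr0.
have [m [qm Hm]] := LT_exists gt_wo (cov_finsupp q) nz.
apply: (@move_gen _ (rmulw q v) (m ++ v) (q m) _ qm (rmulw_cat _ _ _) (cov_r v (cov_finsupp q))) => //.
move=> f g fk Hg; left; exists (ttag q), m, v; split; first by exists q.
by split => //; split.
Qed.

Lemma goodM2 p c w v : P p -> good (fun u => c * lmulw w (rmulw p v) u).
Proof.
move=> Pp; split.
  exists (map (cat w) (map (cat^~ v) (finsupp p))).
  by apply: cov_scale; apply: cov_l; apply: cov_r; apply: cov_finsupp.
move=> r r' Hr.
case: (nonzero_or p) => [p0|nz].
  suff -> : r' = r by apply: rst_refl.
  by apply/fsfunP => u; rewrite Hr lmulw_zero ?mulr0 ?addr0 // => x; rewrite rmulw_zero.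
have [m [pm Hm]] := LT_exists gt_wo (cov_finsupp p) nz.
have Rk : lmulw w (rmulw p v) (w ++ m ++ v) = p m by rewrite lmulw_cat rmulw_cat.
apply: (@move_gen _ _ (w ++ m ++ v) (p m) _ pm Rk (cov_l w (cov_r v (cov_finsupp p)))) => //.
move=> f g fk Hg; right; exists p, m, w, v; split => //.
Qed.

End Ideal.

Section Main.
Variables (gt : seq X -> seq X -> Prop) (gt_wo : monoid_wellorder gt)
  (P Q : fpoly K X -> Prop)
  (theta_surj : forall a : A, exists f, theta iota f = a)
  (theta_ker : forall f, theta iota f = 0 <-> in_ideal2 P f).

Lemma rid0 : in_rideal iota Q 0.
Proof. by exists [::]; split => //; rewrite big_nil. Qed.

Lemma ridN a : in_rideal iota Q a -> in_rideal iota Q (- a).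
Proof.
move=> [s [Hs ->]]; exists (map (fun t => (t.1, - t.2)) s); split.
  by move=> t /List.in_map_iff [t' [<- /Hs]].
by rewrite big_map -sumrN; apply: eq_bigr => t _; rewrite mulrN.
Qed.

Lemma ridD a b : in_rideal iota Q a -> in_rideal iota Q b -> in_rideal iota Q (a + b).
Proof.
move=> [s [Hs Ea]] [s' [Hs' Eb]]; exists (s ++ s'); split.
  by move=> t Ht; case: (List.in_app_or _ _ _ Ht) => [/Hs|/Hs'].
by rewrite big_cat Ea Eb.
Qed.

Lemma theta_P p : P p -> theta iota p = 0.
Proof.
move=> Pp; apply/theta_ker; exists [:: (1, [::], p, [::])]; split.
  by move=> t [<-|[]].
by move=> u; rewrite big_cons big_nil addr0 /= mul1r lmulw_nil rmulw_nil.
Qed.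

Lemma red_to_rideal t1 t2 : RE gt P Q t1 t2 ->
  in_rideal iota Q (theta iota t1 - theta iota t2).
Proof.
rewrite /RE /red_equiv => H; elim: H => {t1 t2} [f g Hs| t | t1 t2 _ IH | t1 t2 t3 _ IH1 _ IH2].
- case: Hs => [[fi [m [v [[q [Qq ->]] [_ [_ Hg]]]]]] | [fi [m [w [v [Pfi [_ [_ Hg]]]]]]]].
  + set c := f (m ++ v) / q m.
    have Hg' : forall u, g u = f u + (- c) * rmulw q v u.
      by move=> u; rewrite Hg mulNr.
    rewrite (theta_comb (cov_r v (cov_finsupp q)) Hg') rsum_theta.
    rewrite opprD addrA subrr add0r scaleNr opprK scalerAr.
    exists [:: (q, c *: wordA iota v)]; split; first by move=> t [<-|[]].
    by rewrite big_cons big_nil addr0.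
  + set c := f (w ++ m ++ v) / fi m.
    have Hg' : forall u, g u = f u + (- c) * lmulw w (rmulw fi v) u.
      by move=> u; rewrite Hg mulNr.
    rewrite (theta_comb (cov_l w (cov_r v (cov_finsupp fi))) Hg') lrsum_theta.
    by rewrite (theta_P Pfi) mul0r mulr0 scaler0 addr0 subrr; exact: rid0.
- by rewrite subrr; exact: rid0.
- by rewrite -opprB; exact: ridN.
- by have := ridD IH1 IH2; rewrite addrA subrK.
Qed.

Lemma sub_step q c v (r : tpoly K X) : Q q -> exists r' : tpoly K X,
  RE gt P Q r' r /\ theta iota r' = theta iota r - c *: (theta iota q * wordA iota v).
Proof.
move=> Qq.
have [r' Hr'] := mkfs (cov_lin (- c) (cov_finsupp r) (cov_r v (cov_finsupp q))).
exists r'; split.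
  by apply: (goodM1 gt_wo P c v Qq).2 => u; rewrite Hr' mulNr subrK.
by rewrite (theta_comb (cov_r v (cov_finsupp q)) Hr') rsum_theta scaleNr.
Qed.

Lemma sub_list q (h : fpoly K X) V (r : tpoly K X) : Q q -> exists r' : tpoly K X,
  RE gt P Q r' r /\ theta iota r' = theta iota r - theta iota q * \sum_(v <- V) h v *: wordA iota v.
Proof.
move=> Qq; elim: V => [|v V [r1 [H1 E1]]].
  by exists r; split; [apply: rst_refl | rewrite big_nil mulr0 subr0].
have [r2 [H2 E2]] := sub_step (h v) v r1 Qq.
exists r2; split; first exact: rst_trans H2 H1.
by rewrite E2 E1 big_cons mulrDr scalerAr opprD addrA addrAC.
Qed.

Lemma rideal_to_red L : forall t1 t2 : tpoly K X, (forall t, List.In t L -> Q t.1) ->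
  theta iota t1 - theta iota t2 = \sum_(t <- L) theta iota t.1 * t.2 -> RE gt P Q t1 t2.
Proof.
elim: L => [|[q a] L IH] t1 t2 HQ.
  rewrite big_nil => E.
  have [D HD] := mkfs (cov_lin (-1) (cov_finsupp t1) (cov_finsupp t2)).
  have : theta iota D = 0.
    by rewrite (theta_comb (cov_finsupp t2) HD) -(thetaE (cov_finsupp t2)) scaleN1r.
  move/theta_ker => [sl [Hsl HD']].
  have G : good gt P Q (fun u => \sum_(t <- sl) t.1.1.1 * lmulw t.1.1.2 (rmulw t.1.2 t.2) u).
    apply: good_sum => t Ht; have := goodM2 gt_wo Q t.1.1.1 t.1.1.2 t.2 (Hsl t Ht). exact.
  apply: rst_sym; apply: G.2 => u; rewrite -HD' HD; ring.
rewrite big_cons /= => E.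
have Qq : Q q by apply: (HQ (q, a)); left.
have [h Hh] := theta_surj a.
have [t1' [H1 E1]] := sub_list h (finsupp h) t1 Qq.
apply: (rst_trans _ _ _ t1'); first exact: rst_sym.
apply: IH; first by move=> t Ht; apply: HQ; right.
have E' : \sum_(t <- L) theta iota t.1 * t.2 = theta iota t1 - theta iota t2 - theta iota q * a by rewrite E addrAC subrr add0r.
rewrite E' E1 -/(theta iota h) Hh addrAC. done.
Qed.

End Main.
End Alg.

Theorem theorem3p6 (K : fieldType) (X : choiceType) (A : algType K)
  (gt : seq X -> seq X -> Prop) (gt_wo : monoid_wellorder gt)
  (iota : X -> A) (P Q : fpoly K X -> Prop)
  (theta_surj : forall a : A, exists f, theta iota f = a)
  (theta_ker : forall f, theta iota f = 0 <-> in_ideal2 P f) :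
  exists phi : quot (red_equiv gt (fun t : tpoly K X => exists q, Q q /\ t = ttag q) P) ->
               quot (fun a b : A => in_rideal iota Q (a - b)),
    bijective phi.
Proof.
apply: (@quot_bij _ _ _ _ (fun t : tpoly K X => theta iota t)).
- by move=> a; rewrite subrr; exact: rid0.
- by move=> a b H; rewrite -opprB; exact: ridN.
- by move=> a b c H1 H2; have := ridD H1 H2; rewrite addrA subrK.
- move=> x y; split; first exact: red_to_rideal.
  move=> [L [HL E]]; exact: (rideal_to_red gt_wo theta_surj theta_ker HL E).
- move=> a; have [f Hf] := theta_surj a; exists f; rewrite Hf subrr; exact: rid0.
Qed.
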